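(* For all integers $n\geq 8$ and $0\leq k\leq n/4$ there is a function $F_{n,k}$, defined on multisets of $n-k$ isomorphism classes of $(n-1)$-vertex graphs and taking real values, such that the following holds. For every graph $G$ on $n$ vertices with average degree $d^*$ and every choice of distinct vertices $v_1,\dots,v_{n-k}$ of $G$, the quantity $\widetilde d=F_{n,k}(\{G-v_1,\dots,G-v_{n-k}\})$ satisfies $0\leq \widetilde d-d^*<1$. (That is, from any deck of $G$ missing $k\le n/4$ cards one can reconstruct a quantity $\widetilde d$ with $0\le\widetilde d-d^*<1$.)
   Context: All graphs are finite, simple and undirected. For a graph $G$ and $v\in V(G)$, the card $G-v$ is the graph obtained by deleting $v$ and all edges incident to it. The average degree of an $n$-vertex graph with $m$ edges is $2m/n$. The multiset of cards is unlabelled, i.e. only the isomorphism classes of the cards are given. *)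

(* Defs.v *)
From HB Require Import structures.
From mathcomp Require Import all_boot all_order all_algebra fingroup perm.
From mathcomp Require Import reals.
Set Implicit Arguments. Unset Strict Implicit. Unset Printing Implicit Defensive.
Import Order.TTheory GRing.Theory Num.Theory.

Definition simple_graph (n : nat) (g : rel 'I_n) : Prop :=
  symmetric g /\ irreflexive g.

Definition nedges (n : nat) (g : rel 'I_n) : nat :=
  #|[set e : 'I_n * 'I_n | (e.1 < e.2)%N && g e.1 e.2]|.

Definition avg_degree (R : realType) (n : nat) (g : rel 'I_n) : R :=
  ((2 * nedges g)%:R / n%:R)%R.

(* The card G - v, with the remaining vertices relabelled by 'I_n.-1
   in increasing order (via lift v). *)
Definition deleted_card (n : nat) (g : rel 'I_n) (v : 'I_n) : rel 'I_n.-1 :=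
  fun i j => g (lift v i) (lift v j).

Definition graph_iso (m : nat) (g h : rel 'I_m) : Prop :=
  exists s : {perm 'I_m}, forall x y, g x y = h (s x) (s y).

(* A function on indexed families of N graphs that only depends on the
   multiset of isomorphism classes, i.e. is a function on multisets of
   N isomorphism classes of m-vertex graphs. *)
Definition deck_invariant (R : Type) (N m : nat)
    (F : ('I_N -> rel 'I_m) -> R) : Prop :=
  forall (D1 D2 : 'I_N -> rel 'I_m) (s : {perm 'I_N}),
    (forall i, graph_iso (D1 i) (D2 (s i))) -> F D1 = F D2.

(* Main.v *)
Require Import Defs.
From HB Require Import structures.
From mathcomp Require Import all_boot all_order all_algebra fingroup perm.
From mathcomp Require Import reals.
From mathcomp Require Import zify ring lra.
Import Order.TTheory GRing.Theory Num.Theory.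
Set Implicit Arguments. Unset Strict Implicit.

Definition Esum m (h : rel 'I_m) : nat := (\sum_a \sum_b (h a b : nat))%N.

Lemma Esum_iso m (g h : rel 'I_m) : graph_iso g h -> Esum g = Esum h.
Proof.
case=> s Hs; rewrite /Esum [in RHS](reindex_inj (@perm_inj _ s)) /=.
apply: eq_bigr => a _; rewrite [in RHS](reindex_inj (@perm_inj _ s)) /=.
by apply: eq_bigr => b _; rewrite Hs.
Qed.

Lemma nedgesE m (g : rel 'I_m) :
  nedges g = (\sum_(a : 'I_m) \sum_(b : 'I_m) (((a < b)%N && g a b) : nat))%N.
Proof.
rewrite /nedges -sum1_card (pair_big predT predT (fun (a b : 'I_m) => (((a < b)%N && g a b) : nat))) /=.
rewrite big_mkcond /=; apply: eq_bigr => e _; rewrite inE; by case: (_ && _).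
Qed.

Lemma Esum_nedges m (g : rel 'I_m) : simple_graph g -> Esum g = (2 * nedges g)%N.
Proof.
case=> sg ig; rewrite nedgesE /Esum.
have -> : (\sum_a \sum_b (g a b : nat) =
   \sum_(a : 'I_m) \sum_(b : 'I_m) (((a < b)%N && g a b) : nat) + \sum_(a : 'I_m) \sum_(b : 'I_m) (((b < a)%N && g a b) : nat))%N.
  rewrite -big_split; apply: eq_bigr => a _; rewrite -big_split; apply: eq_bigr => b _ /=.
  case: (ltngtP a b) => [|| /val_inj ->]; rewrite ?ig ?addn0 //.
rewrite mul2n -addnn; congr (_ + _); rewrite exchange_big; apply: eq_bigr => a _;
apply: eq_bigr => b _; by rewrite sg.
Qed.

Lemma sum_lift n (j : 'I_n) (F : 'I_n -> nat) :
  (\sum_(a | a != j) F a = \sum_(i < n.-1) F (lift j i))%N.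
Proof.
have := @bigD1_ord nat addn 0%N n j predT F (erefl true); rewrite (bigD1 j) //=.
by move/addnI.
Qed.

Lemma Esum_card n (g : rel 'I_n) (v : 'I_n) :
  Esum (deleted_card g v) = (\sum_(a | a != v) \sum_(b | b != v) (g a b : nat))%N.
Proof.
rewrite sum_lift /Esum /deleted_card; apply: eq_bigr => i _.
by rewrite sum_lift.
Qed.

Section Count.
Variables (n N : nat) (g : rel 'I_n) (v : 'I_N -> 'I_n).
Hypotheses (sg : symmetric g) (ig : irreflexive g) (iv : injective v).

Definition cnt (a : 'I_n) : nat := (\sum_i (v i == a : nat))%N.

Lemma cnt_le1 a : (cnt a <= 1)%N.
Proof.
rewrite /cnt; case: (pickP (fun i => v i == a)) => [i /eqP Hi|H].
  rewrite (bigD1 i) //= big1 ?Hi ?eqxx // => j Hj.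
  by case: eqP => // Hja; move: Hj; rewrite -Hi in Hja; rewrite (iv Hja) eqxx.
by rewrite big1 // => i _; rewrite H.
Qed.

Lemma sum_cnt : (\sum_a cnt a = N)%N.
Proof.
rewrite /cnt exchange_big /= (eq_bigr (fun _ => 1%N)).
  by rewrite sum_nat_const card_ord muln1.
move=> i _; rewrite (bigD1 (v i)) //= eqxx big1 // => a Ha.
by rewrite eq_sym (negbTE Ha).
Qed.

Lemma deg_le a : (\sum_b (g a b : nat) <= n.-1)%N.
Proof.
rewrite (bigD1 a) //= ig add0n.
apply: (@leq_trans (\sum_(b | b != a) 1)%N).
  by apply: leq_sum => b _; case: (g a b).
by rewrite sum1_card cardC1 card_ord.
Qed.

Lemma sum_mkcond (u : 'I_n) (F : 'I_n -> nat) :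
  (\sum_(a | a != u) F a = \sum_a (a != u) * F a)%N.
Proof. by rewrite big_mkcond; apply: eq_bigr => a _; case: (a != u); rewrite ?mul1n. Qed.

Lemma per_u (u : 'I_n) :
  (\sum_(a | a != u) \sum_(b | b != u) (g a b : nat)
   + \sum_a \sum_b (g a b : nat) * ((u == a) + (u == b)) = Esum g)%N.
Proof.
rewrite sum_mkcond -big_split; apply: eq_bigr => a _.
rewrite sum_mkcond big_distrr -big_split; apply: eq_bigr => b _ /=.
case Hg: (g a b); last by rewrite !muln0.
have Hab : a != b by apply: contraTneq Hg => ->; rewrite ig.
case: (eqVneq u a) => [Hua|Hua]; case: (eqVneq u b) => [Hub|Hub] //=.
by move: Hab; rewrite -Hua -Hub eqxx.
Qed.

Definition Wsum : nat := (\sum_a \sum_b (g a b : nat) * (cnt a + cnt b))%N.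

Lemma total :
  (\sum_i \sum_(a | a != v i) \sum_(b | b != v i) (g a b : nat) + Wsum = N * Esum g)%N.
Proof.
have -> : Wsum = (\sum_i \sum_a \sum_b (g a b : nat) * ((v i == a) + (v i == b)))%N.
  rewrite exchange_big /Wsum; apply: eq_bigr => a _ /=.
  rewrite exchange_big; apply: eq_bigr => b _ /=.
  by rewrite -big_distrr /= big_split.
rewrite -big_split /= (eq_bigr (fun _ => Esum g)); last by move=> i _; exact: per_u.
by rewrite sum_nat_const card_ord.
Qed.

Lemma W_le : (Wsum <= 2 * Esum g)%N.
Proof.
rewrite /Wsum /Esum big_distrr; apply: leq_sum => a _.
rewrite big_distrr; apply: leq_sum => b _ /=.
have := cnt_le1 a; have := cnt_le1 b; case: (g a b) => /=; lia.
Qed.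

Lemma W_ge : (2 * Esum g <= Wsum + 2 * (n.-1 * (n - N)))%N.
Proof.
have HW : Wsum = (2 * \sum_a cnt a * \sum_b (g a b : nat))%N.
  rewrite /Wsum mul2n -addnn.
  have -> : (\sum_a \sum_b (g a b : nat) * (cnt a + cnt b) =
     \sum_a \sum_b (g a b : nat) * cnt a + \sum_a \sum_b (g a b : nat) * cnt b)%N.
    rewrite -big_split; apply: eq_bigr => a _; rewrite -big_split; apply: eq_bigr => b _.
    by rewrite mulnDr.
  have E1 : (\sum_a \sum_b (g a b : nat) * cnt a = \sum_a cnt a * \sum_b (g a b : nat))%N.
    by apply: eq_bigr => a _; rewrite big_distrr; apply: eq_bigr => b _; rewrite mulnC.
  rewrite E1; congr (_ + _); rewrite exchange_big; apply: eq_bigr => a _ /=.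
  by rewrite big_distrr; apply: eq_bigr => b _; rewrite sg mulnC.
rewrite HW -mulnDr leq_mul2l /=.
have Hk : (\sum_a (1 - cnt a) = n - N)%N.
  have : (\sum_a (1 - cnt a) + \sum_a cnt a = n)%N.
    rewrite -big_split /= (eq_bigr (fun _ => 1%N)).
      by rewrite sum_nat_const card_ord muln1.
    by move=> a _; have := cnt_le1 a; lia.
  rewrite sum_cnt; lia.
rewrite -Hk big_distrr -big_split /= /Esum; apply: leq_sum => a _.
have := cnt_le1 a; have := deg_le a.
case: (cnt a) => [|[|c]] /=; lia.
Qed.

End Count.

Unset Implicit Arguments.
Local Open Scope ring_scope.

Theorem lemma2p2 (R : realType) (n k : nat) :
  (8 <= n)%N -> (4 * k <= n)%N ->
  exists F : ('I_(n - k) -> rel 'I_n.-1) -> R,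
    deck_invariant F /\
    forall (g : rel 'I_n) (v : 'I_(n - k) -> 'I_n),
      simple_graph g -> injective v ->
      let dt := F (fun i => deleted_card g (v i)) in
      0 <= dt - avg_degree R g /\ dt - avg_degree R g < 1.
Proof.
move=> Hn Hk.
exists (fun D => ((\sum_i Esum (D i))%N%:R / (n * (n - k - 2))%N%:R : R)).
split.
  move=> D1 D2 s H; congr (_%:R / _); rewrite [in RHS](reindex_inj (@perm_inj _ s)).
  by apply: eq_bigr => i _; apply: Esum_iso.
move=> g v [sg ig] iv /=.
set T := (\sum_i Esum (deleted_card g (v i)))%N.
have HT : T = (\sum_i \sum_(a | a != v i) \sum_(b | b != v i) (g a b : nat))%N.
  by apply: eq_bigr => i _; rewrite Esum_card.
have Htot := total v ig.
have Wle := W_le g iv.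
have Wge := W_ge sg ig iv.
rewrite -HT in Htot.
set Eg := Esum g in Htot Wle Wge.
set W := Wsum g v in Htot Wle Wge.
have Hnm : n.-1 = (n - 1)%N by rewrite subn1.
rewrite Hnm in Wge.
have L1 : ((n - k - 2) * Eg <= T)%N by nia.
have L2 : (T - (n - k - 2) * Eg < n * (n - k - 2))%N.
  have : (2 * ((n - 1) * (n - (n - k))) < n * (n - k - 2))%N by nia.
  nia.
have Havg : avg_degree R g = Eg%:R / n%:R by rewrite /avg_degree /Eg Esum_nedges.
rewrite Havg.
have n0 : (n%:R : R) != 0 by rewrite pnatr_eq0; lia.
have m0 : ((n - k - 2)%N%:R : R) != 0 by rewrite pnatr_eq0; lia.
have -> : (T%:R / (n * (n - k - 2))%N%:R - Eg%:R / n%:R : R) =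
    (T - (n - k - 2) * Eg)%N%:R / (n * (n - k - 2))%N%:R.
  rewrite natrB // !natrM; field; by rewrite n0 m0.
split; first by apply: divr_ge0; apply: ler0n.
rewrite ltr_pdivrMr ?mul1r ?ltr_nat //.
rewrite ltr0n; lia.
Qed.
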